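(* Assume $V$ is an $(X^{\rm in},T,\varphi)$-compatible Opt-Lyapunov function for $(X^{\rm in},T)$ with $N'_T(V)>0$, and let $\alpha$ be an $(X^{\rm in},T,\varphi)$-certificate of compatibility for $V$, with $I$ the interval such that $\alpha(I)=[0,1]$ and $\alpha$ strictly increasing continuous on $\operatorname{conv}(I^\varphi\cup I)$. Let $J=\overline{\operatorname{conv}}(I^\varphi\cup I)$, $\overline V=\sup_{x\in X^{\rm in}}V(x)$, and $h(x)=(\alpha|_J)^{-1}(x\overline V)$ for $x\in[0,1]$ (extended arbitrarily to $\mathbb R$). Then $h$ is strictly increasing and continuous on $[0,1]$, $N'_T(V)\in(0,1)$, $\nu_k\le h\big((N'_T(V))^k\big)$ for all $k\in\mathbb N$, and $\{k\in\mathbb N:\nu_k>h(0)\}\neq\emptyset$.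
   Context: Standing data: nonempty $X^{\rm in}\subseteq\mathbb R^d$, $T:\mathbb R^d\to\mathbb R^d$, $\varphi:\mathbb R^d\to\mathbb R$ with $\varphi(0)=0$, $\nu_k=\sup_{x\in X^{\rm in}}\varphi(T^k(x))$ finite for all $k$; $G^{>}_\nu=\{k:\nu_k>\limsup_n\nu_n\}$. An Opt-Lyapunov function for $(X^{\rm in},T)$ is $V:\mathbb R^d\to[0,+\infty]$ with $\sup_{X^{\rm in}}V\in(0,1]$ and $V\circ T\le\lambda V$ for some $\lambda\in(0,1)$. $N'_T(V)=\sup\{V(T(x))/V(x):V(x)\in(0,+\infty)\}$. $I^\varphi=\overline{\operatorname{conv}}\{\varphi(T^k(x)):k\in\mathbb N,x\in X^{\rm in}\}$. $\mathrm{SC}$: functions $\alpha:\mathbb R\to\mathbb R$ with an interval $I$ such that $\alpha(I)=[0,1]$ and $\alpha$ strictly increasing continuous on $\operatorname{conv}(I^\varphi\cup I)$ (such $I$ is unique). A certificate of compatibility for $g$ is $\alpha\in\mathrm{SC}$ with $\alpha(\nu_k)>0$ for some $k\in G^{>}_\nu$ and $\alpha(\varphi(T^k(x)))\le g(T^k(x))$ for all $k,x\in X^{\rm in}$. $g$ is $(X^{\rm in},T,\varphi)$-compatible if for some $k\in G^{>}_\nu$ there are $\varepsilon,\eta>0$ with: $x\in X^{\rm in}$, $j\in\mathbb N$, $\varphi(T^j(x))>\nu_k-\eta$ imply $g(T^j(x))>\varepsilon$. *)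

(* Defs.v *)
From HB Require Import structures.
From mathcomp Require Import all_boot all_order all_algebra.
From mathcomp Require Import all_classical all_reals all_analysis.
Set Implicit Arguments. Unset Strict Implicit. Unset Printing Implicit Defensive.
Import Order.TTheory GRing.Theory Num.Theory.
Import numFieldNormedType.Exports.
Local Open Scope classical_set_scope.
Local Open Scope ring_scope.

Section Defs.
Context {R : realType} {d : nat}.
Implicit Types (Xin : set 'rV[R]_d) (T : 'rV[R]_d -> 'rV[R]_d)
  (phi : 'rV[R]_d -> R) (V : 'rV[R]_d -> \bar R).

Definition convexR (A : set R) : Prop :=
  forall x y (t : R), A x -> A y -> 0 <= t <= 1 -> A (t * x + (1 - t) * y).

Definition conv_hull (S : set R) : set R :=
  \bigcap_(C in [set C : set R | convexR C /\ S `<=` C]) C.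

Definition cl_conv_hull (S : set R) : set R := closure (conv_hull S).

Definition orbit_vals Xin T phi (k : nat) : set R :=
  [set phi (iter k T x) | x in Xin].

Definition nu Xin T phi (k : nat) : R := sup (orbit_vals Xin T phi k).

Definition Ggt Xin T phi : set nat :=
  [set k | (limn_esup (fun n => (nu Xin T phi n)%:E) < (nu Xin T phi k)%:E)%E].

Definition Vsup Xin V : \bar R := ereal_sup (V @` Xin).

Definition opt_lyapunov Xin T V : Prop :=
  (0 < Vsup Xin V)%E /\ (Vsup Xin V <= 1)%E /\
  exists lam : R, 0 < lam < 1 /\ forall x, (V (T x) <= lam%:E * V x)%E.

Definition Nprime T V : \bar R :=
  ereal_sup [set (V (T x) * ((fine (V x))^-1)%:E)%E
            | x in [set x | (0 < V x)%E /\ (V x < +oo)%E]].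

Definition Iphi Xin T phi : set R :=
  cl_conv_hull [set phi (iter k T x) | k in [set: nat] & x in Xin].

Definition SC_with Xin T phi (alpha : R -> R) (I : set R) : Prop :=
  is_interval I /\ alpha @` I = `[0, 1]%classic /\
  let K := conv_hull (Iphi Xin T phi `|` I) in
  {in K &, {homo alpha : x y / x < y}} /\ {within K, continuous alpha}.

Definition SC Xin T phi (alpha : R -> R) : Prop :=
  exists I, SC_with Xin T phi alpha I.

Definition certificate Xin T phi (alpha : R -> R) (g : 'rV[R]_d -> \bar R) : Prop :=
  SC Xin T phi alpha /\
  (exists2 k, Ggt Xin T phi k & 0 < alpha (nu Xin T phi k)) /\
  forall k x, Xin x -> ((alpha (phi (iter k T x)))%:E <= g (iter k T x))%E.

Definition compatible Xin T phi (g : 'rV[R]_d -> \bar R) : Prop :=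
  exists2 k, Ggt Xin T phi k &
  exists eps eta : R, 0 < eps /\ 0 < eta /\
    forall x j, Xin x -> nu Xin T phi k - eta < phi (iter j T x) ->
      (eps%:E < g (iter j T x))%E.

End Defs.

(* Main.v *)
Set Warnings "-all".
Require Import Defs.
From HB Require Import structures.
From mathcomp Require Import all_boot all_order all_algebra.
From mathcomp Require Import all_classical all_reals all_analysis.
From mathcomp Require Import ring lra.
Import Order.TTheory GRing.Theory Num.Theory.
Import numFieldNormedType.Exports.
Local Open Scope classical_set_scope.
Local Open Scope ring_scope.

Section Aux.
Context {R : realType}.

Lemma conv_hull_convex (S : set R) : convexR (conv_hull S).
Proof.
move=> x y t Hx Hy Ht C [HC HS]; exact: HC (Hx C (conj HC HS)) (Hy C (conj HC HS)) Ht.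
Qed.

Lemma sub_conv_hull (S : set R) : S `<=` conv_hull S.
Proof. by move=> x Sx C [_ HS]; apply: HS. Qed.

Lemma conv_hull_min (S C : set R) : convexR C -> S `<=` C -> conv_hull S `<=` C.
Proof. by move=> HC HS x; apply; split. Qed.

Lemma clos_ball_aux (A : set R) e eps : closure A e -> 0 < eps ->
  exists k, A k /\ `|e - k| < eps.
Proof.
move=> He eps0.
have := He (ball e eps) (nbhsx_ballx e eps eps0).
by move=> [k [Ak]]; rewrite -ball_normE /=; exists k.
Qed.

Lemma cl_ball_aux (A : set R) e : closed A -> ~ A e ->
  exists2 d, 0 < d & forall k, A k -> d <= `|e - k|.
Proof.
move=> /closed_openC Ao nAe.
have : nbhs e (~` A) by rewrite nbhsE; exists (~` A).
move=> /nbhs_ballP[d d0 Hd]; exists d => // k Ak.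
rewrite leNgt; apply/negP => H; apply: (Hd k) => //.
Qed.

Lemma convexR_le c : convexR [set x : R | x <= c].
Proof.
move=> x y t /= xc yc /andP[t0 t1].
have -> : c = t * c + (1 - t) * c by ring.
apply: lerD; apply: ler_wpM2l => //; by rewrite subr_ge0.
Qed.

Lemma convexR_ge c : convexR [set x : R | c <= x].
Proof.
move=> x y t /= xc yc /andP[t0 t1].
have -> : c = t * c + (1 - t) * c by ring.
apply: lerD; apply: ler_wpM2l => //; by rewrite subr_ge0.
Qed.

End Aux.
Section Aux2.
Context {R : realType}.

Lemma hull_closed (A B : set R) : closed A ->
  (exists2 a, B a & forall y, B y -> a <= y) ->
  (exists2 b, B b & forall y, B y -> y <= b) ->
  forall e : R, closure (conv_hull (A `|` B)) e -> conv_hull (A `|` B) e.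
Proof.
move=> Acl [a Ba amin] [b Bb bmax] e He.
set K := conv_hull _ in He *.
apply: contrapT => nKe.
have nAe : ~ A e by move=> Ae; apply: nKe; apply: sub_conv_hull; left.
have [d d0 Hd] : exists2 d : R, 0 < d & forall k, A k -> d <= `|e - k| := cl_ball_aux _ _ Acl nAe.
have KB : forall y, B y -> K y by move=> y By; apply: sub_conv_hull; right.
have KA : forall y, A y -> K y by move=> y By; apply: sub_conv_hull; left.
have neK : forall k, K k -> k != e by move=> k Kk; apply/eqP => E; apply: nKe; rewrite -E.
have side : (forall k, K k -> k < e) \/ (forall k, K k -> e < k).
  case: (pselect (exists k, K k /\ k < e)) => [[k1 [Kk1 k1e]]|H]; [left|right].
  - move=> k2 Kk2; rewrite ltNge; apply/negP => ek2.
    have k2e : e < k2 by rewrite lt_neqAle ek2 andbT eq_sym neK.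
    apply: nKe.
    have k21 : k2 - k1 != 0 by rewrite subr_eq0; apply/eqP => E; move: k1e k2e; rewrite E; lra.
    have -> : e = ((k2 - e) / (k2 - k1)) * k1 + (1 - (k2 - e) / (k2 - k1)) * k2.
      by field.
    apply: conv_hull_convex => //.
    have k21p : 0 < k2 - k1 by lra.
    apply/andP; split; first by apply: divr_ge0; lra.
    by rewrite ler_pdivrMr // mul1r; lra.
  - move=> k Kk; rewrite ltNge; apply/negP => ke.
    have : k < e by rewrite lt_neqAle neK.
    by move=> ?; apply: H; exists k.
case: side => [Hlt|Hgt].
- have bK := Hlt b (KB b Bb).
  have [c [c1 [c2 c3]]] : exists c : R, (e - d : R) <= c /\ b <= c /\ c < e.
    exists (Num.max (e - d) b); rewrite le_max lexx /= le_max lexx orbT gt_max bK andbT.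
    by split => //; split => //; lra.
  have Kc : K `<=` [set x | x <= c].
    apply: conv_hull_min; first exact: convexR_le.
    move=> x [Ax|Bx] /=.
    + have h1 := Hlt x (KA x Ax); have h2 := Hd x Ax.
      rewrite ger0_norm in h2; lra.
    + by apply: le_trans (bmax x Bx) c2.
  have ce : 0 < e - c by lra.
  have [k [Kk]] := clos_ball_aux _ _ _ He ce.
  have H1 : k <= c := Kc k Kk; have H2 := Hlt k Kk => /= H3.
  rewrite ger0_norm in H3; lra.
- have aK := Hgt a (KB a Ba).
  have [c [c1 [c2 c3]]] : exists c : R, c <= (e + d : R) /\ c <= a /\ e < c.
    exists (Num.min (e + d) a); rewrite ge_min lexx /= ge_min lexx orbT lt_min aK andbT.
    by split => //; split => //; lra.
  have Kc : K `<=` [set x | c <= x].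
    apply: conv_hull_min; first exact: convexR_ge.
    move=> x [Ax|Bx] /=.
    + have h1 := Hgt x (KA x Ax); have h2 := Hd x Ax.
      rewrite ler0_norm in h2; lra.
    + by apply: le_trans c2 (amin x Bx).
  have ce : 0 < c - e by lra.
  have [k [Kk]] := clos_ball_aux _ _ _ He ce.
  have H1 : c <= k := Kc k Kk; have H2 := Hgt k Kk => /= H3.
  rewrite ler0_norm in H3; lra.
Qed.
End Aux2.
Lemma convexR_between {R : realType} (C : set R) u v z : convexR C -> C u -> C v ->
  u <= z <= v -> C z.
Proof.
move=> HC Cu Cv /andP[uz zv].
have [<-//|uz'] := eqVneq u z.
have ult : u < z by rewrite lt_neqAle uz' uz.
have vu : 0 < v - u by lra.
have k21 : v - u != 0 by rewrite gt_eqF.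
have -> : z = ((v - z) / (v - u)) * u + (1 - (v - z) / (v - u)) * v by field.
apply: HC => //.
apply/andP; split; first by apply: divr_ge0; lra.
by rewrite ler_pdivrMr // mul1r; lra.
Qed.

Theorem mainTheorem18 (R : realType) (d : nat)
  (Xin : set 'rV[R]_d) (T : 'rV[R]_d -> 'rV[R]_d) (phi : 'rV[R]_d -> R)
  (V : 'rV[R]_d -> \bar R) (alpha : R -> R) (I : set R) (h : R -> R) :
  Xin !=set0 ->
  phi 0 = 0 ->
  (forall k, has_ubound (orbit_vals Xin T phi k)) ->
  opt_lyapunov Xin T V ->
  compatible Xin T phi V ->
  (0 < Nprime T V)%E ->
  certificate Xin T phi alpha V ->
  SC_with Xin T phi alpha I ->
  (forall x, 0 <= x <= 1 ->
     cl_conv_hull (Iphi Xin T phi `|` I) (h x) /\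
     alpha (h x) = x * fine (Vsup Xin V)) ->
  ({in `[0, 1] &, {homo h : x y / x < y}} /\
   {within `[0, 1], continuous h}) /\
  (exists r : R, Nprime T V = r%:E /\ 0 < r < 1 /\
     forall k : nat, nu Xin T phi k <= h (r ^+ k)) /\
  (exists k : nat, h 0 < nu Xin T phi k).
Proof.
move=> Hne _ Hub [V0 [V1 [lam [/andP[lam0 lam1] HV]]]] _ HN
  [_ [[k0 _ ak0] Hc]] [Iint [HI [Hmono Hcont]]] Hh.
set K := conv_hull (Iphi Xin T phi `|` I).
have Iphicl : closed (Iphi Xin T phi) by exact: closed_closure.
have KI : forall y, I y -> K y by move=> y Iy; apply: sub_conv_hull; right.
have KP : forall y, Iphi Xin T phi y -> K y by move=> y Iy; apply: sub_conv_hull; left.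
have Hm : forall u v, K u -> K v -> u < v -> alpha u < alpha v.
  by move=> u v Ku Kv; apply: Hmono; apply: mem_set.
have amono : forall u v, K u -> K v -> alpha u < alpha v -> u < v.
  move=> u v Ku Kv auv; rewrite ltNge le_eqVlt; apply/negP => /orP[/eqP E|vu].
  - by move: auv; rewrite E ltxx.
  - by have := lt_trans (Hm v u Kv Ku vu) auv; rewrite ltxx.
have amonole : forall u v, K u -> K v -> alpha u <= alpha v -> u <= v.
  move=> u v Ku Kv auv; rewrite leNgt; apply/negP => vu.
  by have := Hm v u Kv Ku vu; rewrite ltNge auv.
have amonole_rev : forall u v, K u -> K v -> u <= v -> alpha u <= alpha v.
  move=> u v Ku Kv; rewrite le_eqVlt => /orP[/eqP ->//|uv].
  exact/ltW/Hm.
have ainj : forall u v, K u -> K v -> alpha u = alpha v -> u = v.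
  move=> u v Ku Kv E; apply/eqP; rewrite eq_le.
  by rewrite (amonole u v) ?E // (amonole v u) ?E.
have Irange : forall y, I y -> 0 <= alpha y <= 1.
  move=> y Iy; have : (alpha @` I) (alpha y) by exists y.
  by rewrite HI /= in_itv /=.
have [a Ia a0] : exists2 a, I a & alpha a = 0.
  have : `[0, 1]%classic (0 : R) by rewrite /= in_itv /= ler01 lexx.
  by rewrite -HI => -[a Ia Ea]; exists a.
have [b Ib b1] : exists2 b, I b & alpha b = 1.
  have : `[0, 1]%classic (1 : R) by rewrite /= in_itv /= ler01 lexx.
  by rewrite -HI => -[b Ib Eb]; exists b.
have amin : forall y, I y -> a <= y.
  move=> y Iy; apply: amonole => //; [exact: KI|exact: KI|].
  by rewrite a0; case/andP: (Irange y Iy).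
have bmax : forall y, I y -> y <= b.
  move=> y Iy; apply: amonole => //; [exact: KI|exact: KI|].
  by rewrite b1; case/andP: (Irange y Iy).
have hK : forall x, 0 <= x <= 1 -> K (h x).
  move=> x Hx; apply: (hull_closed _ _ Iphicl); [by exists a|by exists b|].
  exact: (Hh x Hx).1.
have [vb [Evb [vb0 vb1]]] : exists vb : R, Vsup Xin V = vb%:E /\ 0 < vb /\ vb <= 1.
  move: V0 V1; case: (Vsup Xin V) => [v| |] //= v0 v1.
  by exists v; rewrite -lte_fin -lee_fin.
have hE : forall x, 0 <= x <= 1 -> alpha (h x) = x * vb.
  by move=> x Hx; rewrite (Hh x Hx).2 Evb.
have K0 : K (h 0) by apply: hK; rewrite lexx ler01.
have K1 : K (h 1) by apply: hK; rewrite lexx ler01.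
have hmono : {in `[0, 1] &, {homo h : x y / x < y}}.
  move=> x y; rewrite !in_itv /= => Hx Hy xy.
  apply: amono; [exact: hK|exact: hK|].
  by rewrite !hE // ltr_pM2r.
split; [split => //|split].
  apply: segment_inc_surj_continuous; first exact: le_mono_in hmono.
  move=> z; rewrite /= in_itv /= => /andP[z0 z1].
  have Kz : K z by apply: (convexR_between _ _ _ _ (conv_hull_convex _) K0 K1); rewrite z0 z1.
  have az0 : 0 <= alpha z.
    by rewrite -(mul0r vb) -hE ?lexx ?ler01 //; apply: amonole_rev.
  have az1 : alpha z <= vb.
    by rewrite -(mul1r vb) -hE ?lexx ?ler01 //; apply: amonole_rev.
  have Hw : 0 <= alpha z / vb <= 1.
    by rewrite divr_ge0 ?(ltW vb0) //= ler_pdivrMr // mul1r.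
  exists (alpha z / vb); first by rewrite /= in_itv.
  apply: ainj => //; first exact: hK.
  by rewrite hE // divfK // gt_eqF.
have Nle : (Nprime T V <= lam%:E)%E.
  apply: ge_ereal_sup => _ [x [Vx0 Vxoo] <-].
  move: Vx0 Vxoo (HV x); case Ev: (V x) => [v| |] //= v0 _ H.
  rewrite lte_fin in v0.
  have := lee_wpmul2r (x := (v^-1)%:E) _ H.
  rewrite lee_fin invr_ge0 (ltW v0) => /(_ isT) /le_trans; apply.
  by rewrite -!EFinM mulfK // gt_eqF.
have [r [Er [r0 rlam]]] : exists r, Nprime T V = r%:E /\ 0 < r /\ r <= lam.
  move: HN Nle; case: (Nprime T V) => [r| |] //=.
  by rewrite lte_fin lee_fin => r0 rl; exists r.
have Step : forall y (c : R), (V y <= c%:E)%E -> (V (T y) <= (r * c)%:E)%E.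
  move=> y c; case Ev: (V y) => [v| |] //= Hvc.
  - rewrite lee_fin in Hvc; case: (ltrP 0 v) => v0.
    + have Hs : (V (T y) * (v^-1)%:E <= r%:E)%E.
        rewrite -Er; apply: ereal_sup_ubound; exists y; first by rewrite /= Ev lte_fin ltry.
        by rewrite Ev.
      have := lee_wpmul2r (x := v%:E) _ Hs.
      rewrite lee_fin (ltW v0) -muleA -EFinM mulVf ?gt_eqF // mule1 => /(_ isT) H.
      apply: (le_trans H); rewrite -EFinM lee_fin; apply: ler_wpM2l => //; exact: ltW.
    + have := HV y; rewrite Ev -EFinM => H; apply: (le_trans H); rewrite lee_fin.
      nra.
  - have := HV y; rewrite Ev mulrNy gtr0_sg // mul1e leeNy_eq => /eqP ->.
    exact: leNye.
have Iter : forall k x, Xin x -> (V (iter k T x) <= (r ^+ k * vb)%:E)%E.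
  elim => [|k IH] x Xx /=.
    by rewrite expr0 mul1r -Evb; apply: ereal_sup_ubound; exists x.
  by rewrite exprS -mulrA; apply: Step; apply: IH.
have ptsK : forall k x, Xin x -> K (phi (iter k T x)).
  move=> k x Xx; apply: KP; apply: subset_closure; apply: sub_conv_hull.
  by exists k => //; exists x.
have r1 : r < 1 by lra.
exists r; split => //; split; first by rewrite r0 r1.
move=> k.
have rk : 0 <= r ^+ k <= 1 by rewrite exprn_ge0 ?exprn_ile1 // ltW.
apply: ge_sup.
  by case: Hne => x Xx; exists (phi (iter k T x)); exists x.
move=> _ [x Xx <-].
apply: amonole => //; [exact: ptsK | exact: hK |].
rewrite hE // -lee_fin; apply: le_trans (Hc k x Xx) _.
exact: Iter.
exists k0.
have Kn : K (nu Xin T phi k0).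
  apply: KP; apply: (closureS (A := orbit_vals Xin T phi k0)).
    move=> _ [x Xx <-]; apply: sub_conv_hull.
    by exists k0 => //; exists x.
  apply: closure_sup => //.
  by case: Hne => x Xx; exists (phi (iter k0 T x)); exists x.
apply: (amono _ _ K0 Kn).
by rewrite hE ?mul0r // lexx ler01.
Qed.
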